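(* Let $d\ge 0$ and $t\ge 0$ be integers and let $\beta=\left\lfloor\frac{t+1}{d+1}\right\rfloor$, and assume $\beta>1$. For any simplicial complex $K$ of dimension $d$ containing $m$ simplices, the number of distinct filtrations $f:K\to\{0,1,\ldots,t\}$ is at least $\beta^{m}$. Moreover, if $\beta>(d+1)^{\delta}$ for some constant $\delta>0$, then any data structure that can represent filtrations of the class of all $d$-dimensional simplicial complexes containing $m$ simplices requires $\Omega(m\log t)$ bits to be stored.
   Context: A filtration of a simplicial complex $K$ with range $\{0,1,\ldots,t\}$ is a function $f:K\to\{0,1,\ldots,t\}$ such that $f(\tau)\le f(\sigma)$ whenever $\tau\subseteq\sigma$. A data structure representing a class of objects is an encoding of each object as a bit string such that distinct objects receive distinct encodings; its storage requirement is the maximum length of an encoding. *)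

(* Defs.v *)
From HB Require Import structures.
From mathcomp Require Import all_boot all_order all_algebra.
From mathcomp Require Import finmap.
From mathcomp Require Import all_classical all_reals all_analysis.

Set Implicit Arguments.
Unset Strict Implicit.
Unset Printing Implicit Defensive.

Local Open Scope fset_scope.

Definition is_simplicial_complex (K : {fset {fset nat}}) : Prop :=
  forall s, s \in K -> s != fset0 /\
    (forall u : {fset nat}, u `<=` s -> u != fset0 -> u \in K).

Definition complex_of_dim (d : nat) (K : {fset {fset nat}}) : Prop :=
  is_simplicial_complex K /\
  (exists2 s, s \in K & #|` s| = d.+1) /\
  (forall s, s \in K -> #|` s| <= d.+1)%N.

Definition is_filtration (t : nat) (K : {fset {fset nat}})
  (f : {ffun K -> 'I_t.+1}) : bool :=
  [forall s1 : K, forall s2 : K, (val s1 `<=` val s2) ==> (f s1 <= f s2)%N].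

Definition beta (d t : nat) : nat := (t.+1 %/ d.+1)%N.

(* Objects represented by a data structure: a complex together with a filtration of it. *)
Definition FObj (t : nat) := {K : {fset {fset nat}} & {ffun K -> 'I_t.+1}}.

Definition in_class (d m t : nat) (o : FObj t) : Prop :=
  complex_of_dim d (projT1 o) /\ #|` projT1 o| = m /\ is_filtration (projT2 o).

(* Main.v *)
Set Warnings "-all".
Require Import Defs.
From HB Require Import structures.
From mathcomp Require Import all_boot all_order all_algebra.
From mathcomp Require Import finmap.
From mathcomp Require Import all_classical all_reals all_analysis.
From mathcomp Require Import zify ring lra.
Import Order.TTheory GRing.Theory Num.Theory.
Local Open Scope fset_scope.
Lemma part1 (d t : nat) (K : {fset {fset nat}}) :
  complex_of_dim d K ->
  (beta d t ^ #|` K| <= #|[set f : {ffun K -> 'I_t.+1} | is_filtration f]|)%N.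
Proof.
move=> [cK [_ dimK]].
set b := beta d t.
have hb : (b * d.+1 <= t.+1)%N by rewrite /b /beta leq_trunc_div.
pose val_of (g : {ffun K -> 'I_b}) (s : K) : nat := ((#|` val s|).-1 * b + g s)%N.
have vlt : forall g s, (val_of g s < t.+1)%N.
  move=> g s; rewrite /val_of.
  have h2 : (#|` val s| <= d.+1)%N := dimK _ (fsvalP s).
  have h1 := ltn_ord (g s).
  have h3 : ((#|` val s|).-1 * b <= d * b)%N.
    by rewrite leq_mul2r; apply/orP; right; lia.
  nia.
pose phi (g : {ffun K -> 'I_b}) : {ffun K -> 'I_t.+1} := [ffun s => Ordinal (vlt g s)].
have phi_inj : injective phi.
  move=> g1 g2 /ffunP h; apply/ffunP => s; apply/val_inj.
  have := h s; rewrite !ffunE => /(congr1 val) /= /eqP.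
  rewrite /val_of eqn_add2l => /eqP //.
have phi_filt : forall g, is_filtration (phi g).
  move=> g; apply/forallP => s1; apply/forallP => s2; apply/implyP => sub.
  rewrite !ffunE /= /val_of.
  have [e|ne] := eqVneq (val s1) (val s2).
    by have -> : s1 = s2 by apply: val_inj.
  have hp : val s1 `<` val s2 by rewrite fproperEneq ne sub.
  have h3 : (#|` val s1| < #|` val s2|)%N := fproper_ltn_card hp.
  have [n1 _] := cK _ (fsvalP s1).
  have h2 : (0 < #|` val s1|)%N by rewrite cardfs_gt0.
  have h1 := ltn_ord (g s1).
  have h4 : ((#|` val s1|).-1.+1 * b <= (#|` val s2|).-1 * b)%N.
    by rewrite leq_mul2r; apply/orP; right; lia.
  rewrite mulSn in h4.
  apply: ltnW; apply: (leq_trans _ (leq_addr _ _)).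
  apply: leq_trans h4; rewrite addnC ltn_add2r //.
apply: (@leq_trans #|[set phi g | g in {ffun K -> 'I_b}]|).
  by rewrite card_imset // card_ffun card_ord cardfE.
apply: subset_leq_card; apply/fintype.subsetP => f /imsetP [g _ ->].
by rewrite inE phi_filt.
Qed.
Fixpoint bcode (s : seq bool) : nat :=
  match s with [::] => 1 | b :: s' => (b + (bcode s').*2)%N end.

Lemma bcode_gt0 s : (0 < bcode s)%N.
Proof. by elim: s => //= b s IH; rewrite -double_gt0 in IH; lia. Qed.

Lemma bcode_lt s : (bcode s < 2 ^ (size s).+1)%N.
Proof. elim: s => //= b s IH; rewrite expnS; case: b => /=; lia. Qed.

Lemma bcode_inj : injective bcode.
Proof.
elim=> [|b1 s1 IH] [|b2 s2] //=.
- by have := bcode_gt0 s2; case: b2 => /=; lia.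
- by have := bcode_gt0 s1; case: b1 => /=; lia.
- move=> e.
  have eb : b1 = b2 by move: e; case: b1; case: b2 => //=; lia.
  subst b2; congr (_ :: _); apply: IH; move: e; case: b1 => /=; lia.
Qed.

Lemma pigeon (T : finType) (S : {set T}) (h : T -> seq bool) (L : nat) :
  {in S &, injective h} -> (2 ^ L < #|S|)%N ->
  exists2 x, x \in S & (L <= size (h x))%N.
Proof.
move=> hinj hL.
case: (pickP [pred x in S | L <= size (h x)]) => [x /andP [xS hx]|none].
  by exists x.
exfalso; move: hL; apply/negP; rewrite -leqNgt.
rewrite cardE -(size_map (bcode \o h)) -[X in (_ <= X)%N](size_iota 0).
apply: uniq_leq_size.
  rewrite map_inj_in_uniq ?enum_uniq // => x y; rewrite !mem_enum => xS yS /= e.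
  by apply: hinj => //; apply: bcode_inj.
move=> n /mapP [x]; rewrite mem_enum => xS -> /=.
rewrite mem_iota add0n.
have := none x; rewrite /= xS /= => /negbT; rewrite -ltnNge => hx.
apply: (leq_trans (bcode_lt _)); rewrite leq_exp2l //.
Qed.
Local Open Scope ring_scope.
Lemma realpart (R : realType) (delta : R) (d t k m : nat) : 0 < delta ->
  (2 <= m)%N -> (1 <= k)%N -> (1 < beta d t)%N -> (beta d t < 2 ^ k.+1)%N ->
  (d.+1)%:R `^ delta < (beta d t)%:R ->
  delta / (4 * (1 + delta)) * m%:R * ln (t%:R : R) <= (k * m - 1)%:R.
Proof.
move=> dp hm hk hb hbk hpow.
set b := beta d t in hb hbk hpow.
have hbt : (b * d.+1 <= t.+1)%N by rewrite /b /beta leq_trunc_div.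
have tpos : (0 < t)%N by nia.
have htb : (t.+1 < b.+1 * d.+1)%N by rewrite /b /beta ltn_ceil.
have d1p : 0 < (d.+1)%:R :> R by rewrite ltr0n.
have bp : 0 < b%:R :> R by rewrite ltr0n; lia.
have ha : delta * ln (d.+1)%:R < ln (b%:R : R).
  rewrite -ln_powR ltr_ln // ?posrE // powR_gt0 //.
have l2 : ln (2 : R) <= 1.
  have := @le_ln1Dx R 1; rewrite (_ : 1 + 1 = 2 :> R); last by [].
  by apply; lra.
have l2p : 0 <= ln (2 : R) by apply: ln_ge0; lra.
have hb2 : ln (b.+1%:R : R) <= k.+1%:R * ln 2.
  rewrite mulr_natl -lnXn; last by lra.
  rewrite ler_ln ?posrE ?ltr0n //.
  by rewrite -natrX ler_nat.
have hb1 : ln (b%:R : R) <= ln (b.+1%:R : R).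
  by rewrite ler_ln ?posrE ?ler_nat // ltr0n.
have hX : ln (t%:R : R) <= ln (d.+1)%:R + ln (b.+1%:R : R).
  rewrite -lnM ?posrE ?ltr0n //.
  rewrite ler_ln ?posrE ?ltr0n //.
  by rewrite -natrM ler_nat mulnC; lia.
have la : 0 <= ln ((d.+1)%:R : R) by apply: ln_ge0; rewrite ler1n.
set X := ln (t%:R : R) in hX *.
set a := ln ((d.+1)%:R : R) in ha hX la.
set l := ln (2 : R) in l2 l2p hb2.
have kR : 1 <= k%:R :> R by rewrite ler1n.
have mR : 2 <= m%:R :> R by rewrite ler_nat.
have hdX : delta * X <= 2 * k%:R * (1 + delta).
  have e1 : delta * X <= delta * a + delta * (k.+1%:R * l).
    rewrite -mulrDr; apply: ler_wpM2l; lra.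
  have e2 : delta * (k.+1%:R * l) <= delta * k.+1%:R.
    apply: ler_wpM2l; first lra.
    rewrite -[X in _ <= X]mulr1; apply: ler_wpM2l => //.
  have e3 : k.+1%:R * l <= k.+1%:R.
    rewrite -[X in _ <= X]mulr1; apply: ler_wpM2l => //.
  have e4 : (k%:R + 1) * (1 + delta) <= 2 * k%:R * (1 + delta).
    apply: ler_wpM2r; lra.
  rewrite -!natr1 in hb2 hb1 e2 e1 e3 *.
  lra.
have km1 : (1 <= k * m)%N by rewrite muln_gt0 hk (ltnW hm).
rewrite natrB // natrM.
have X0 : 0 <= X by apply: ln_ge0; rewrite ler1n.
have ne : 4 * (1 + delta) != 0 by rewrite gt_eqF //; lra.
rewrite (_ : _ * _ * X = (m%:R * (delta * X)) / (4 * (1 + delta))); last first.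
  by field; rewrite gt_eqF //; lra.
rewrite ler_pdivrMr; last by lra.
have e5 : m%:R * (delta * X) <= m%:R * (2 * k%:R * (1 + delta)).
  by apply: ler_wpM2l => //; lra.
have e6 : 2 <= k%:R * m%:R :> R.
  by rewrite -natrM (ler_nat R 2) (leq_trans hm) // leq_pmull.
have e7 : 0 <= (1 + delta) * (k%:R * m%:R - 2).
  by apply: mulr_ge0; lra.
lra.
Qed.

Theorem lemma3 (R : realType) :
  (forall (d t : nat) (K : {fset {fset nat}}),
     (1 < beta d t)%N -> complex_of_dim d K ->
     (beta d t ^ #|` K| <= #|[set f : {ffun K -> 'I_t.+1} | is_filtration f]|)%N)
  /\
  (forall delta : R, 0 < delta ->
     exists c : R, 0 < c /\ exists m0 : nat,
       forall d t m : nat, (m0 <= m)%N -> (1 < beta d t)%N ->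
         (d.+1)%:R `^ delta < (beta d t)%:R ->
         (exists K, complex_of_dim d K /\ #|` K|%fset = m) ->
         forall enc : FObj t -> seq bool,
           (forall o1 o2, in_class d m o1 -> in_class d m o2 ->
              enc o1 = enc o2 -> o1 = o2) ->
           exists o, in_class d m o /\
             c * m%:R * ln (t%:R : R) <= (size (enc o))%:R).
Proof.
split; first by move=> d t K _; exact: part1.
move=> delta dp; exists (delta / (4 * (1 + delta))); split.
  by apply: divr_gt0 => //; lra.
exists 2%N => d t m hm hb hpow [K [cK cardK]] enc inj.
set k := trunc_log 2 (beta d t).
have hk : (1 <= k)%N by rewrite trunc_log_gt0 hb.
have hbk : (beta d t < 2 ^ k.+1)%N by apply: trunc_log_ltn.
have hkb : (2 ^ k <= beta d t)%N by apply: trunc_logP => //; apply: ltnW.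
pose S := [set f : {ffun K -> 'I_t.+1} | is_filtration f].
pose h := fun f : {ffun K -> 'I_t.+1} => enc (existT _ K f).
have hinj : {in S &, injective h}.
  move=> f1 f2; rewrite !inE => h1 h2 e.
  have e' : (existT _ K f1 : FObj t) = existT _ K f2.
    by apply: inj => //; split => //; split.
  exact: existT_inj2 e'.
have km1 : (1 <= k * m)%N by rewrite muln_gt0 hk (ltnW hm).
have hL : (2 ^ (k * m - 1) < #|S|)%N.
  apply: (@leq_trans (2 ^ (k * m))).
    by rewrite ltn_exp2l // subn1 prednK.
  apply: (@leq_trans (beta d t ^ m)).
    by rewrite expnM leq_exp2r // (leq_trans _ hm).
  by rewrite -cardK; apply: part1.
have [f fS hf] := @pigeon _ S h _ hinj hL.
exists (existT _ K f); split.
  by split; [exact: cK | split; [exact: cardK | by move: fS; rewrite inE]].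
have hr := @realpart R delta d t k m dp hm hk hb hbk hpow.
apply: (le_trans hr); rewrite ler_nat.
exact: hf.
Qed.
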